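(* Let $m>0$, $\delta>0$, and $\varphi_{\mathrm{lead}}(M)=-\frac{16\pi^2}{\log\left(\frac{M\delta}{4m^2}\right)^2+\pi^2}$ for $M\ge4m^2$. For $t>0$ and $\mathbf p\in\mathbb{R}^3$ define the (improper) integral $$C(t,\mathbf p)=-\lim_{R\to\infty}\int_{4m^2}^R\varphi_{\mathrm{lead}}(M)\frac{\sin(\omega_Mt)}{\omega_M}dM,\qquad\omega_M=\sqrt{|\mathbf p|^2+M}.$$ Then there is a constant $C_0>0$ independent of $\mathbf p$ such that $|C(t,\mathbf p)|\le C_0/t$ for all $t>0$, and $t\mapsto C(t,\mathbf p)$ is integrable near $t=0$ with $\sup_{\mathbf p\in\mathbb{R}^3}\int_0^{\tau}|C(t,\mathbf p)|dt<\infty$ for some $\tau>0$. *)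

(* Defs.v *)
From Stdlib Require Import Reals.
From Coquelicot Require Import Coquelicot.
Open Scope R_scope.

Definition pnorm2 (p : R * R * R) : R :=
  let '(p1, p2, p3) := p in p1 ^ 2 + p2 ^ 2 + p3 ^ 2.

Definition phi_lead (m delta M : R) : R :=
  - (16 * PI ^ 2) / ((ln (M * delta / (4 * m ^ 2))) ^ 2 + PI ^ 2).

Definition omega (p : R * R * R) (M : R) : R := sqrt (pnorm2 p + M).

Definition C_integrand (m delta t : R) (p : R * R * R) (M : R) : R :=
  phi_lead m delta M * sin (omega p M * t) / omega p M.

Definition C_partial (m delta t : R) (p : R * R * R) (Rup : R) : R :=
  RInt (C_integrand m delta t p) (4 * m ^ 2) Rup.

Definition C_fun (m delta t : R) (p : R * R * R) : R :=
  - real (Lim (C_partial m delta t p) p_infty).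

(* Main.v *)
Require Import Defs.
From Stdlib Require Import Reals Lra Psatz.
From Coquelicot Require Import Coquelicot.
Open Scope R_scope.

Definition Lg (m delta M : R) := ln (M * delta / (4 * m ^ 2)).
Definition dphi (m delta M : R) :=
  32 * PI ^ 2 * Lg m delta M / (M * (Lg m delta M ^ 2 + PI ^ 2) ^ 2).

Lemma arg_pos m delta M : 0 < m -> 0 < delta -> 0 < M -> 0 < M * delta / (4 * m ^ 2).
Proof. intros. apply Rdiv_lt_0_compat; [nra| nra]. Qed.

Lemma dphi_correct m delta M : 0 < m -> 0 < delta -> 0 < M ->
  is_derive (phi_lead m delta) M (dphi m delta M).
Proof.
  intros Hm Hd HM. pose proof PI_RGT_0. unfold phi_lead, dphi, Lg.
  assert (E : M * delta * / (4 * (m * (m * 1))) = M * delta / (4 * m ^ 2)) by (field; lra).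
  auto_derive; rewrite ?E.
  - split; [now apply arg_pos|]. split; [|auto]. 
    set (L := ln _). nra.
  - set (L := ln _). field. split; [nra|]. split; [lra|]. split; [lra|nra].
Qed.


Lemma P_nonneg p : 0 <= pnorm2 p.
Proof. destruct p as [[a b] c]; simpl; nra. Qed.

Lemma omega_pos p M : 0 < M -> 0 < omega p M.
Proof. intros. unfold omega. apply sqrt_lt_R0. pose proof (P_nonneg p); lra. Qed.

Ltac sc := repeat match goal with
 | |- _ /\ _ => split
 | |- True => exact I
 | |- 0 < _ * _ * / _ => apply Rmult_lt_0_compat; [nra | apply Rinv_0_lt_compat; nra]
 | |- _ * _ <> 0 => apply Rmult_integral_contrapositive_currified
 | |- _ <> 0 => nra
 | |- 0 < _ => nra
 end.

Lemma isRU (f : R -> R) a b (l : R) : is_RInt f a b l -> RInt f a b = l.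
Proof. intro H. exact (is_RInt_unique (V:=R_CompleteNormedModule) f a b l H). Qed.

Lemma RInt_minus_R (f g : R -> R) a b : ex_RInt f a b -> ex_RInt g a b ->
  RInt (fun x => f x - g x) a b = RInt f a b - RInt g a b.
Proof. intros H1 H2. exact (RInt_minus (V:=R_CompleteNormedModule) f g a b H1 H2). Qed.
Lemma RInt_scal_R (f : R -> R) a b k : ex_RInt f a b ->
  RInt (fun x => k * f x) a b = k * RInt f a b.
Proof. intros H1. exact (RInt_scal (V:=R_CompleteNormedModule) f a b k H1). Qed.
Lemma ex_RInt_scal_R (f : R -> R) a b k : ex_RInt f a b -> ex_RInt (fun x => k * f x) a b.
Proof. intros H1. exact (ex_RInt_scal (V:=R_NormedModule) f a b k H1). Qed.
Lemma ex_RInt_minus_R (f g : R -> R) a b : ex_RInt f a b -> ex_RInt g a b ->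
  ex_RInt (fun x => f x - g x) a b.
Proof. intros H1 H2. exact (ex_RInt_minus (V:=R_NormedModule) f g a b H1 H2). Qed.
Lemma RInt_Chasles_R (f : R -> R) a b c : ex_RInt f a b -> ex_RInt f b c ->
  RInt f a b + RInt f b c = RInt f a c.
Proof. intros H1 H2. exact (RInt_Chasles (V:=R_CompleteNormedModule) f a b c H1 H2). Qed.
Lemma ex_RInt_cont_R (f : R -> R) a b :
  (forall z, Rmin a b <= z <= Rmax a b -> continuous f z) -> ex_RInt f a b.
Proof. intros H1. exact (ex_RInt_continuous (V:=R_CompleteNormedModule) f a b H1). Qed.
Lemma RInt_derive_R (f df : R -> R) a b :
  (forall x, Rmin a b <= x <= Rmax a b -> is_derive f x (df x)) ->
  (forall x, Rmin a b <= x <= Rmax a b -> continuous df x) ->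
  RInt df a b = f b - f a.
Proof. intros H1 H2. apply isRU. exact (is_RInt_derive (V:=R_CompleteNormedModule) f df a b H1 H2). Qed.

Definition Gi m delta t p M := dphi m delta M * cos (omega p M * t).

Lemma f_cont m delta t p M : 0 < m -> 0 < delta -> 0 < M ->
  continuous (C_integrand m delta t p) M.
Proof.
  intros Hm Hd HM. apply (@ex_derive_continuous R_AbsRing R_NormedModule).
  pose proof (P_nonneg p). pose proof PI_RGT_0. pose proof (omega_pos p M HM).
  unfold C_integrand, phi_lead. unfold omega in *. auto_derive. sc.
Qed.

Lemma G_cont m delta t p M : 0 < m -> 0 < delta -> 0 < M ->
  continuous (Gi m delta t p) M.
Proof.
  intros Hm Hd HM. apply (@ex_derive_continuous R_AbsRing R_NormedModule).
  pose proof (P_nonneg p). pose proof PI_RGT_0. pose proof (omega_pos p M HM).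
  unfold Gi, dphi, Lg. unfold omega in *. auto_derive. sc.
Qed.

Definition Fi m delta t p M := phi_lead m delta M * cos (omega p M * t).

Lemma F_deriv m delta t p M : 0 < m -> 0 < delta -> 0 < M ->
  is_derive (Fi m delta t p) M (Gi m delta t p M - t / 2 * C_integrand m delta t p M).
Proof.
  intros Hm Hd HM.
  pose proof (P_nonneg p). pose proof PI_RGT_0. pose proof (omega_pos p M HM).
  unfold Fi, Gi, C_integrand, phi_lead, dphi, Lg. unfold omega in *.
  assert (E : M * delta * / (4 * (m * (m * 1))) = M * delta / (4 * m ^ 2)) by (field; lra).
  auto_derive. sc. rewrite ?E.
  set (L := ln _). set (s := sqrt _). set (c := cos _). set (si := sin _).
  field. sc; subst s; lra.
Qed.

Lemma ibp m delta t p A B : 0 < m -> 0 < delta -> 0 < t -> 0 < A -> A <= B ->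
  RInt (C_integrand m delta t p) A B =
  2 / t * (Fi m delta t p A - Fi m delta t p B) + 2 / t * RInt (Gi m delta t p) A B.
Proof.
  intros Hm Hd Ht HA HAB.
  assert (Hin : forall x, Rmin A B <= x <= Rmax A B -> 0 < x).
  { intros x Hx. rewrite Rmin_left in Hx by lra. lra. }
  assert (exf : ex_RInt (C_integrand m delta t p) A B).
  { apply (ex_RInt_continuous (V:=R_CompleteNormedModule)). intros z Hz. apply f_cont; auto. }
  assert (exG : ex_RInt (Gi m delta t p) A B).
  { apply (ex_RInt_continuous (V:=R_CompleteNormedModule)). intros z Hz. apply G_cont; auto. }
  assert (HI := is_RInt_derive (V:=R_CompleteNormedModule) (Fi m delta t p)
     (fun M => Gi m delta t p M - t / 2 * C_integrand m delta t p M) A B).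
  assert (HI2 : is_RInt (fun M => Gi m delta t p M - t / 2 * C_integrand m delta t p M) A B
      (Fi m delta t p B - Fi m delta t p A)).
  { apply HI.
    - intros x Hx. apply F_deriv; auto.
    - intros x Hx. exact (continuous_minus (U:=R_UniformSpace) (K := R_AbsRing) (V:=R_NormedModule)
         (Gi m delta t p) (fun M => scal (t/2) (C_integrand m delta t p M)) x
         (G_cont m delta t p x Hm Hd (Hin x Hx))
         (continuous_scal_r (K := R_AbsRing) (V:=R_NormedModule) (t/2) _ x (f_cont m delta t p x Hm Hd (Hin x Hx)))). }
  apply isRU in HI2.
  assert (E : RInt (fun M => Gi m delta t p M - t / 2 * C_integrand m delta t p M) A B
     = RInt (Gi m delta t p) A B - t / 2 * RInt (C_integrand m delta t p) A B).
  { rewrite RInt_minus_R; auto. rewrite RInt_scal_R; auto. apply ex_RInt_scal_R; auto. }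
  rewrite E in HI2.
  assert (K : forall X Y a b : R, Y - t / 2 * X = b - a -> X = 2/t*(a-b) + 2/t*Y).
  { intros X Y a b HH. apply (Rmult_eq_reg_l (t/2)); [|lra].
    replace (t / 2 * (2 / t * (a - b) + 2 / t * Y)) with (Y - (b - a)) by (field; lra). lra. }
  exact (K _ _ _ _ HI2).
Qed.


Lemma phi_eq m delta M : phi_lead m delta M = - (16 * PI ^ 2 / (Lg m delta M ^ 2 + PI ^ 2)).
Proof. unfold phi_lead, Lg. pose proof PI_RGT_0. field. nra. Qed.

Lemma phi_abs m delta M : Rabs (phi_lead m delta M) = 16 * PI ^ 2 / (Lg m delta M ^ 2 + PI ^ 2).
Proof.
  rewrite phi_eq. pose proof PI_RGT_0. rewrite Rabs_Ropp. apply Rabs_right.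
  apply Rle_ge. apply Rlt_le. apply Rdiv_lt_0_compat; nra.
Qed.

Lemma phi_abs_le m delta M : Rabs (phi_lead m delta M) <= 16.
Proof.
  rewrite phi_abs. pose proof PI_RGT_0. set (L := Lg m delta M).
  apply Rmult_le_reg_r with (L ^ 2 + PI ^ 2); [nra|].
  unfold Rdiv. rewrite Rmult_assoc, Rinv_l by nra. nra.
Qed.

Lemma inv_mono x y : 0 <= x <= y -> 16 * PI ^ 2 / (y ^ 2 + PI ^ 2) <= 16 * PI ^ 2 / (x ^ 2 + PI ^ 2).
Proof.
  intros H. pose proof PI_RGT_0. unfold Rdiv. apply Rmult_le_compat_l; [nra|].
  apply Rinv_le_contravar; nra.
Qed.

Lemma Lg_mono m delta A B : 0 < m -> 0 < delta -> 0 < A -> A <= B -> Lg m delta A <= Lg m delta B.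
Proof.
  intros. unfold Lg. apply ln_le. apply arg_pos; auto.
  unfold Rdiv. apply Rmult_le_compat_r. left; apply Rinv_0_lt_compat; nra. nra.
Qed.

Lemma phi_abs_mono m delta A B : 0 < m -> 0 < delta -> 0 < A -> A <= B -> 0 <= Lg m delta A ->
  Rabs (phi_lead m delta B) <= Rabs (phi_lead m delta A).
Proof.
  intros. rewrite !phi_abs. apply inv_mono. split; auto. apply Lg_mono; auto.
Qed.

Lemma phi_mono m delta A B : 0 < m -> 0 < delta -> 0 < A -> A <= B -> 0 <= Lg m delta A ->
  phi_lead m delta A <= phi_lead m delta B.
Proof.
  intros. rewrite !phi_eq. apply Ropp_le_contravar. apply inv_mono. split; auto. apply Lg_mono; auto.
Qed.

Lemma phi_nonpos m delta M : phi_lead m delta M <= 0.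
Proof. rewrite phi_eq. pose proof PI_RGT_0. assert (0 < 16 * PI ^ 2 / (Lg m delta M ^ 2 + PI ^ 2)) by (apply Rdiv_lt_0_compat; nra). lra. Qed.

Lemma PI_gt3 : 3 < PI.
Proof. pose proof PI2_3_2. lra. Qed.

Definition Ep m delta M := / (M * (1 + Lg m delta M ^ 2)).

Lemma Eat_deriv m delta M : 0 < m -> 0 < delta -> 0 < M ->
  is_derive (fun x => 32 * PI ^ 2 * atan (Lg m delta x)) M (32 * PI ^ 2 * Ep m delta M).
Proof.
  intros Hm Hd HM. pose proof PI_RGT_0. unfold Ep, Lg.
  assert (E : M * delta * / (4 * (m * (m * 1))) = M * delta / (4 * m ^ 2)) by (field; lra).
  auto_derive. sc. rewrite ?E. set (L := ln _). field. split; [nra|]. split; lra.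
Qed.

Lemma Ep_cont m delta M : 0 < m -> 0 < delta -> 0 < M ->
  continuous (fun x => 32 * PI ^ 2 * Ep m delta x) M.
Proof.
  intros Hm Hd HM. apply (@ex_derive_continuous R_AbsRing R_NormedModule).
  pose proof PI_RGT_0. unfold Ep, Lg. auto_derive. sc.
Qed.

Lemma dphi_cont m delta M : 0 < m -> 0 < delta -> 0 < M ->
  continuous (dphi m delta) M.
Proof.
  intros Hm Hd HM. apply (@ex_derive_continuous R_AbsRing R_NormedModule).
  pose proof PI_RGT_0. unfold dphi, Lg. auto_derive. sc.
Qed.

Lemma Gi_le_Ep m delta t p M : 0 < m -> 0 < delta -> 0 < M ->
  Rabs (Gi m delta t p M) <= 32 * PI ^ 2 * Ep m delta M.
Proof.
  intros Hm Hd HM. pose proof PI_gt3. unfold Gi, dphi, Ep.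
  set (L := Lg m delta M).
  rewrite Rabs_mult. apply Rle_trans with (Rabs (32 * PI ^ 2 * L / (M * (L ^ 2 + PI ^ 2) ^ 2)) * 1).
  { apply Rmult_le_compat_l; [apply Rabs_pos | apply Rabs_le; apply COS_bound]. }
  rewrite Rmult_1_r.
  assert (X : Rabs (32 * PI ^ 2 * L / (M * (L ^ 2 + PI ^ 2) ^ 2)) =
     32 * PI ^ 2 * / (M * (1 + L ^ 2)) * (Rabs L * (1 + L ^ 2) / (L ^ 2 + PI ^ 2) ^ 2)).
  { unfold Rdiv. rewrite (Rabs_mult (32 * PI ^ 2 * L)), (Rabs_mult (32 * PI ^ 2)).
    rewrite (Rabs_right (32 * PI ^ 2)) by nra. rewrite Rabs_inv.
    rewrite (Rabs_right (M * _)). field. split; nra. apply Rle_ge. apply Rmult_le_pos; nra. }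
  rewrite X. rewrite <- (Rmult_1_r (32 * PI ^ 2 * / (M * (1 + L ^ 2)))) at 2.
  apply Rmult_le_compat_l.
  { apply Rmult_le_pos; [nra|]. left; apply Rinv_0_lt_compat; nra. }
  apply Rmult_le_reg_r with ((L ^ 2 + PI ^ 2) ^ 2); [apply pow_lt; nra|].
  unfold Rdiv. rewrite Rmult_assoc, Rinv_l by (apply pow_nonzero; nra). rewrite Rmult_1_r, Rmult_1_l.
  pose proof (Rabs_pos L).
  assert (HL2 : Rabs L * Rabs L = L ^ 2).
  { rewrite <- Rabs_mult. rewrite Rabs_right; [ring|]. apply Rle_ge. nra. }
  assert (HP2 : 9 <= PI ^ 2) by nra.
  pose proof (pow2_ge_0 (Rabs L - 1/2)).
  assert (Rabs L <= L ^ 2 + PI ^ 2) by nra.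
  assert (1 + L ^ 2 <= L ^ 2 + PI ^ 2) by nra.
  apply Rle_trans with ((L ^ 2 + PI ^ 2) * (L ^ 2 + PI ^ 2)); [|right; ring].
  apply Rmult_le_compat; nra.
Qed.

Lemma Gi_le_dphi m delta t p M : 0 < m -> 0 < delta -> 0 < M -> 0 <= Lg m delta M ->
  Rabs (Gi m delta t p M) <= dphi m delta M.
Proof.
  intros Hm Hd HM HL. pose proof PI_gt3. unfold Gi.
  assert (0 <= dphi m delta M).
  { unfold dphi. apply Rmult_le_pos; [nra|]. left; apply Rinv_0_lt_compat.
    apply Rmult_lt_0_compat; [lra | apply pow_lt; nra]. }
  rewrite Rabs_mult, (Rabs_right (dphi m delta M)) by lra.
  rewrite <- (Rmult_1_r (dphi m delta M)) at 2.
  apply Rmult_le_compat_l; [lra| apply Rabs_le; apply COS_bound].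
Qed.

Lemma exG m delta t p A B : 0 < m -> 0 < delta -> 0 < A -> A <= B -> ex_RInt (Gi m delta t p) A B.
Proof. intros. apply ex_RInt_cont_R. intros z Hz. rewrite Rmin_left in Hz by lra. apply G_cont; auto; lra. Qed.

Lemma exf m delta t p A B : 0 < m -> 0 < delta -> 0 < A -> A <= B -> ex_RInt (C_integrand m delta t p) A B.
Proof. intros. apply ex_RInt_cont_R. intros z Hz. rewrite Rmin_left in Hz by lra. apply f_cont; auto; lra. Qed.

Lemma exabsG m delta t p A B : 0 < m -> 0 < delta -> 0 < A -> A <= B ->
  ex_RInt (fun x => Rabs (Gi m delta t p x)) A B.
Proof. intros. apply ex_RInt_cont_R. intros z Hz. rewrite Rmin_left in Hz by lra.
  apply continuous_Rabs_comp. apply G_cont; auto; lra. Qed.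

Lemma B1 m delta t p A B : 0 < m -> 0 < delta -> 0 < A -> A <= B ->
  Rabs (RInt (Gi m delta t p) A B) <= 32 * PI ^ 2 * (atan (Lg m delta B) - atan (Lg m delta A)).
Proof.
  intros Hm Hd HA HAB.
  apply Rle_trans with (RInt (fun x => Rabs (Gi m delta t p x)) A B).
  { apply abs_RInt_le; auto. apply exG; auto. }
  apply Rle_trans with (RInt (fun x => 32 * PI ^ 2 * Ep m delta x) A B).
  { apply RInt_le; auto. apply exabsG; auto.
    apply ex_RInt_cont_R. intros z Hz. rewrite Rmin_left in Hz by lra. apply Ep_cont; auto; lra.
    intros x Hx. apply Gi_le_Ep; auto; lra. }
  rewrite (RInt_derive_R (fun x => 32 * PI ^ 2 * atan (Lg m delta x))).
  - right; ring.
  - intros x Hx. rewrite Rmin_left in Hx by lra. apply Eat_deriv; auto; lra.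
  - intros x Hx. rewrite Rmin_left in Hx by lra. apply Ep_cont; auto; lra.
Qed.

Lemma B2 m delta t p A B : 0 < m -> 0 < delta -> 0 < A -> A <= B -> 0 <= Lg m delta A ->
  Rabs (RInt (Gi m delta t p) A B) <= phi_lead m delta B - phi_lead m delta A.
Proof.
  intros Hm Hd HA HAB HL.
  apply Rle_trans with (RInt (fun x => Rabs (Gi m delta t p x)) A B).
  { apply abs_RInt_le; auto. apply exG; auto. }
  apply Rle_trans with (RInt (dphi m delta) A B).
  { apply RInt_le; auto. apply exabsG; auto.
    apply ex_RInt_cont_R. intros z Hz. rewrite Rmin_left in Hz by lra. apply dphi_cont; auto; lra.
    intros x Hx. apply Gi_le_dphi; auto; try lra.
    apply Rle_trans with (Lg m delta A); auto. apply Lg_mono; auto; lra. }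
  rewrite (RInt_derive_R (phi_lead m delta)).
  - right; ring.
  - intros x Hx. rewrite Rmin_left in Hx by lra. apply dphi_correct; auto; lra.
  - intros x Hx. rewrite Rmin_left in Hx by lra. apply dphi_cont; auto; lra.
Qed.

Lemma Fi_abs m delta t p M : Rabs (Fi m delta t p M) <= Rabs (phi_lead m delta M).
Proof.
  unfold Fi. rewrite Rabs_mult. rewrite <- (Rmult_1_r (Rabs (phi_lead m delta M))) at 2.
  apply Rmult_le_compat_l; [apply Rabs_pos| apply Rabs_le; apply COS_bound].
Qed.

Lemma bound_all m delta t p A B : 0 < m -> 0 < delta -> 0 < t -> 0 < A -> A <= B ->
  Rabs (RInt (C_integrand m delta t p) A B) <= 2 / t * (32 + 32 * PI ^ 2 * PI).
Proof.
  intros Hm Hd Ht HA HAB. rewrite ibp; auto.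
  pose proof (B1 m delta t p A B Hm Hd HA HAB).
  pose proof (atan_bound (Lg m delta A)). pose proof (atan_bound (Lg m delta B)).
  pose proof (Fi_abs m delta t p A). pose proof (Fi_abs m delta t p B).
  pose proof (phi_abs_le m delta A). pose proof (phi_abs_le m delta B).
  pose proof PI_gt3.
  assert (0 < 2 / t) by (apply Rdiv_lt_0_compat; lra).
  set (X := RInt (Gi m delta t p) A B) in *.
  assert (HX : Rabs X <= 32 * PI ^ 2 * PI).
  { apply Rle_trans with (32 * PI ^ 2 * (atan (Lg m delta B) - atan (Lg m delta A))); auto.
    apply Rmult_le_compat_l; nra. }
  eapply Rle_trans; [apply Rabs_triang|].
  rewrite !Rabs_mult, (Rabs_right (2 / t)) by lra.
  rewrite Rmult_plus_distr_l. apply Rplus_le_compat; apply Rmult_le_compat_l; try lra.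
  eapply Rle_trans; [apply Rabs_triang|]. rewrite Rabs_Ropp. lra.
Qed.

Lemma bound_tail m delta t p A B : 0 < m -> 0 < delta -> 0 < t -> 0 < A -> A <= B -> 0 <= Lg m delta A ->
  Rabs (RInt (C_integrand m delta t p) A B) <= 6 / t * Rabs (phi_lead m delta A).
Proof.
  intros Hm Hd Ht HA HAB HL. rewrite ibp; auto.
  pose proof (B2 m delta t p A B Hm Hd HA HAB HL).
  pose proof (Fi_abs m delta t p A). pose proof (Fi_abs m delta t p B).
  pose proof (phi_abs_mono m delta A B Hm Hd HA HAB HL).
  pose proof (phi_nonpos m delta A). pose proof (phi_nonpos m delta B).
  rewrite (Rabs_left1 (phi_lead m delta A)) in * by lra.
  rewrite (Rabs_left1 (phi_lead m delta B)) in * by lra.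
  assert (0 < 2 / t) by (apply Rdiv_lt_0_compat; lra).
  set (X := RInt (Gi m delta t p) A B) in *.
  eapply Rle_trans; [apply Rabs_triang|].
  rewrite !Rabs_mult, (Rabs_right (2 / t)) by lra.
  replace (6 / t * - phi_lead m delta A) with (2 / t * (- 2 * phi_lead m delta A) + 2 / t * (- phi_lead m delta A)) by (field; lra).
  apply Rplus_le_compat; apply Rmult_le_compat_l; try lra.
  eapply Rle_trans; [apply Rabs_triang|]. rewrite Rabs_Ropp. lra.
Qed.

Lemma om_deriv p M : 0 < M -> is_derive (fun x => 32 * omega p x) M (16 / omega p M).
Proof.
  intros HM. pose proof (P_nonneg p). pose proof (omega_pos p M HM). unfold omega in *.
  auto_derive. sc. field. lra.
Qed.

Lemma om_cont p M : 0 < M -> continuous (fun x => 16 / omega p x) M.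
Proof.
  intros HM. apply (@ex_derive_continuous R_AbsRing R_NormedModule).
  pose proof (P_nonneg p). pose proof (omega_pos p M HM). unfold omega in *.
  auto_derive. sc.
Qed.

Lemma f_le m delta t p M : 0 < M -> Rabs (C_integrand m delta t p M) <= 16 / omega p M.
Proof.
  intros HM. pose proof (omega_pos p M HM). unfold C_integrand.
  unfold Rdiv. rewrite !Rabs_mult. rewrite Rabs_inv, (Rabs_right (omega p M)) by lra.
  apply Rmult_le_compat_r; [left; apply Rinv_0_lt_compat; lra|].
  rewrite <- (Rmult_1_r 16). apply Rmult_le_compat; try apply Rabs_pos.
  apply phi_abs_le. apply Rabs_le; apply SIN_bound.
Qed.

Lemma bound_first m delta t p A B : 0 < m -> 0 < delta -> 0 < A -> A <= B ->
  Rabs (RInt (C_integrand m delta t p) A B) <= 32 * (omega p B - omega p A).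
Proof.
  intros Hm Hd HA HAB.
  apply Rle_trans with (RInt (fun x => Rabs (C_integrand m delta t p x)) A B).
  { apply abs_RInt_le; auto. apply exf; auto. }
  apply Rle_trans with (RInt (fun x => 16 / omega p x) A B).
  { apply RInt_le; auto.
    apply ex_RInt_cont_R. intros z Hz. rewrite Rmin_left in Hz by lra.
    apply continuous_Rabs_comp. apply f_cont; auto; lra.
    apply ex_RInt_cont_R. intros z Hz. rewrite Rmin_left in Hz by lra. apply om_cont; lra.
    intros x Hx. apply f_le; lra. }
  rewrite (RInt_derive_R (fun x => 32 * omega p x)).
  - right; ring.
  - intros x Hx. rewrite Rmin_left in Hx by lra. apply om_deriv; lra.
  - intros x Hx. rewrite Rmin_left in Hx by lra. apply om_cont; lra.
Qed.


Lemma ball_R (x y e : R) : Rabs (y - x) < e -> @ball R_UniformSpace x e y.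
Proof. intros H. exact H. Qed.

Lemma phi_small m delta e : 0 < m -> 0 < delta -> 0 < e ->
  exists R0, 0 < R0 /\ forall M, R0 <= M -> 0 <= Lg m delta M /\ Rabs (phi_lead m delta M) <= e.
Proof.
  intros Hm Hd He. pose proof PI_gt3.
  assert (Hpos : 0 <= 16 * PI ^ 2 / e) by (apply Rlt_le, Rdiv_lt_0_compat; nra).
  set (Lam := 1 + 16 * PI ^ 2 / e).
  assert (HLam : 1 <= Lam). { unfold Lam. assert (0 <= 16 * PI ^ 2 / e) by (apply Rlt_le, Rdiv_lt_0_compat; nra). lra. }
  exists (exp Lam * (4 * m ^ 2) / delta). split.
  { apply Rdiv_lt_0_compat; [apply Rmult_lt_0_compat; [apply exp_pos | nra]| lra]. }
  intros M HM.
  assert (HR0 : 0 < exp Lam * (4 * m ^ 2) / delta).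
  { apply Rdiv_lt_0_compat; [apply Rmult_lt_0_compat; [apply exp_pos | nra]| lra]. }
  assert (HLg : Lg m delta (exp Lam * (4 * m ^ 2) / delta) = Lam).
  { unfold Lg. replace (exp Lam * (4 * m ^ 2) / delta * delta / (4 * m ^ 2)) with (exp Lam) by (field; split; nra).
    apply ln_exp. }
  assert (HL : Lam <= Lg m delta M). { rewrite <- HLg. apply Lg_mono; auto. }
  split; [lra|].
  rewrite phi_abs. apply Rle_trans with (16 * PI ^ 2 / (Lam ^ 2 + PI ^ 2)).
  { apply inv_mono; lra. }
  apply Rle_trans with (16 * PI ^ 2 / Lam).
  { unfold Rdiv. apply Rmult_le_compat_l; [nra|]. apply Rinv_le_contravar; nra. }
  unfold Lam at 1. apply Rmult_le_reg_r with (1 + 16 * PI ^ 2 / e); [assert (0 <= 16 * PI ^ 2 / e) by (apply Rlt_le, Rdiv_lt_0_compat; nra); lra|].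
  unfold Rdiv at 1. rewrite Rmult_assoc, Rinv_l by lra. rewrite Rmult_1_r.
  rewrite Rmult_plus_distr_l, Rmult_1_r.
  replace (e * (16 * PI ^ 2 / e)) with (16 * PI ^ 2) by (field; lra). lra.
Qed.

Lemma Cp_diff m delta t p u v : 0 < m -> 0 < delta -> 4 * m ^ 2 <= u -> u <= v ->
  C_partial m delta t p v - C_partial m delta t p u = RInt (C_integrand m delta t p) u v.
Proof.
  intros Hm Hd Hu Huv. unfold C_partial.
  assert (0 < 4 * m ^ 2) by nra.
  rewrite <- (RInt_Chasles_R (C_integrand m delta t p) (4 * m ^ 2) u v).
  ring. apply exf; auto; lra. apply exf; auto; lra.
Qed.

Lemma tail_est m delta t p e : 0 < m -> 0 < delta -> 0 < t -> 0 < e ->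
  exists R1, 4 * m ^ 2 <= R1 /\ forall u v, R1 <= u -> u <= v ->
    Rabs (C_partial m delta t p v - C_partial m delta t p u) <= e.
Proof.
  intros Hm Hd Ht He.
  destruct (phi_small m delta (e * t / 6) Hm Hd) as [R0 [HR0 HR]].
  { apply Rdiv_lt_0_compat; nra. }
  exists (Rmax R0 (4 * m ^ 2)). split; [apply Rmax_r|].
  intros u v Hu Huv.
  assert (R0 <= u) by (eapply Rle_trans; [apply Rmax_l| exact Hu]).
  assert (4 * m ^ 2 <= u) by (eapply Rle_trans; [apply Rmax_r| exact Hu]).
  assert (0 < 4 * m ^ 2) by nra.
  rewrite Cp_diff; auto. destruct (HR u) as [HL Hphi]; auto.
  eapply Rle_trans; [apply bound_tail; auto; lra|].
  apply Rle_trans with (6 / t * (e * t / 6)).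
  { apply Rmult_le_compat_l; auto. apply Rlt_le, Rdiv_lt_0_compat; lra. }
  right; field; lra.
Qed.

Lemma part1 m delta t p : 0 < m -> 0 < delta -> 0 < t ->
  ex_finite_lim (C_partial m delta t p) p_infty.
Proof.
  intros Hm Hd Ht.
  destruct (proj1 (filterlim_locally_cauchy (T := R) (U := R_CompleteSpace)
     (F := Rbar_locally' p_infty) (C_partial m delta t p))) as [y Hy].
  - intros eps. destruct (tail_est m delta t p (eps / 2) Hm Hd Ht) as [R1 [H1 H2]].
    { destruct eps; simpl; lra. }
    exists (fun u => R1 < u). split.
    + exists R1. auto.
    + intros u v Hu Hv. apply ball_R.
      destruct (Rle_lt_dec u v).
      * eapply Rle_lt_trans; [apply H2; lra|]. destruct eps; simpl; lra.
      * rewrite Rabs_minus_sym. eapply Rle_lt_trans; [apply H2; lra|]. destruct eps; simpl; lra.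
  - exists y. exact Hy.
Qed.

Lemma lim_bound (g : R -> R) (l y K R1 : R) : is_lim g p_infty (Finite l) ->
  (forall v, R1 < v -> Rabs (g v - y) <= K) -> Rabs (l - y) <= K.
Proof.
  intros Hl Hb. apply is_lim_spec in Hl.
  destruct (Rle_or_lt (Rabs (l - y)) K) as [H|H]; auto.
  exfalso. assert (He : 0 < (Rabs (l - y) - K) / 2) by lra.
  destruct (Hl (mkposreal _ He)) as [M HM]. simpl in HM.
  set (v := Rmax M R1 + 1).
  assert (M < v) by (unfold v; pose proof (Rmax_l M R1); lra).
  assert (R1 < v) by (unfold v; pose proof (Rmax_r M R1); lra).
  specialize (HM v H0). specialize (Hb v H1).
  assert (Rabs (l - y) <= Rabs (g v - l) + Rabs (g v - y)).
  { replace (l - y) with (-(g v - l) + (g v - y)) by ring.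
    eapply Rle_trans; [apply Rabs_triang|]. rewrite Rabs_Ropp. lra. }
  lra.
Qed.

Lemma Cfun_spec m delta t p : 0 < m -> 0 < delta -> 0 < t ->
  is_lim (C_partial m delta t p) p_infty (Finite (- C_fun m delta t p)).
Proof.
  intros Hm Hd Ht. destruct (part1 m delta t p Hm Hd Ht) as [l Hl].
  unfold C_fun. rewrite (is_lim_unique _ _ _ Hl). simpl. rewrite Ropp_involutive. exact Hl.
Qed.

Lemma part2 m delta t p : 0 < m -> 0 < delta -> 0 < t ->
  Rabs (C_fun m delta t p) <= 2 * (32 + 32 * PI ^ 2 * PI) / t.
Proof.
  intros Hm Hd Ht.
  assert (H := lim_bound _ _ 0 (2 / t * (32 + 32 * PI ^ 2 * PI)) (4 * m ^ 2) (Cfun_spec m delta t p Hm Hd Ht)).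
  replace (2 * (32 + 32 * PI ^ 2 * PI) / t) with (2 / t * (32 + 32 * PI ^ 2 * PI)) by (field; lra).
  replace (C_fun m delta t p) with (- (- C_fun m delta t p - 0)) by ring.
  rewrite Rabs_Ropp. apply H. intros v Hv. rewrite Rminus_0_r. unfold C_partial.
  apply bound_all; auto; try lra. nra.
Qed.

Definition hb m delta t := 32 / sqrt t + 6 / t * (16 * PI ^ 2 / (Lg m delta (/ t) ^ 2 + PI ^ 2)).

Lemma part3_bound m delta t p : 0 < m -> 0 < delta -> 0 < t -> t <= delta / (4 * m ^ 2) ->
  Rabs (C_fun m delta t p) <= hb m delta t.
Proof.
  intros Hm Hd Ht Htau.
  set (P := pnorm2 p). assert (HP : 0 <= P) by apply P_nonneg.
  set (A0 := 4 * m ^ 2). assert (HA0 : 0 < A0) by (unfold A0; nra).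
  set (a := omega p A0). assert (Ha : 0 < a) by (apply omega_pos; auto).
  assert (Ha2 : a * a = P + A0) by (unfold a, omega; apply sqrt_sqrt; lra).
  set (s := sqrt t). assert (Hs : 0 < s) by (apply sqrt_lt_R0; auto).
  assert (Hs2 : s * s = t) by (apply sqrt_sqrt; lra).
  set (M2 := (a + / s) ^ 2 - P).
  assert (HM2e : M2 = A0 + 2 * a * / s + / s * / s) by (unfold M2; simpl; nra).
  assert (Hinv : 0 < / s) by (apply Rinv_0_lt_compat; auto).
  assert (HM2a : A0 <= M2) by nra.
  assert (HM2t : / t <= M2).
  { replace (/ t) with (/ s * / s) by (rewrite <- Hs2; field; lra). nra. }
  assert (Hom2 : omega p M2 = a + / s).
  { unfold omega. fold P. replace (P + M2) with ((a + / s) ^ 2) by (unfold M2; ring).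
    apply sqrt_pow2. lra. }
  assert (Hit : 0 < / t) by (apply Rinv_0_lt_compat; auto).
  assert (HLt : 0 <= Lg m delta (/ t)).
  { unfold Lg. rewrite <- ln_1. apply ln_le; [lra|].
    apply Rmult_le_reg_l with t; auto.
    replace (t * (/ t * delta / (4 * m ^ 2))) with (delta / (4 * m ^ 2)) by (field; split; nra).
    rewrite Rmult_1_r. auto. }
  assert (H := lim_bound _ _ 0 (hb m delta t) M2 (Cfun_spec m delta t p Hm Hd Ht)).
  replace (C_fun m delta t p) with (- (- C_fun m delta t p - 0)) by ring.
  rewrite Rabs_Ropp. apply H. intros v Hv. rewrite Rminus_0_r.
  replace (C_partial m delta t p v) with
     (RInt (C_integrand m delta t p) A0 M2 + RInt (C_integrand m delta t p) M2 v).
  2:{ rewrite <- (Cp_diff m delta t p M2 v); auto; try lra. unfold C_partial. fold A0. assert (K : forall x y : R, x + (y - x) = y) by (intros; ring). apply K. }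
  eapply Rle_trans; [apply Rabs_triang|]. unfold hb. apply Rplus_le_compat.
  - eapply Rle_trans; [apply bound_first; auto; lra|].
    rewrite Hom2. fold a. right. unfold Rdiv. fold s. field. lra.
  - eapply Rle_trans; [apply bound_tail; auto; try lra|].
    + apply Rle_trans with (Lg m delta (/ t)); auto. apply Lg_mono; auto.
    + rewrite <- phi_abs. apply Rmult_le_compat_l.
      * apply Rlt_le, Rdiv_lt_0_compat; lra.
      * apply phi_abs_mono; auto.
Qed.

Lemma tail_unif m delta p t0 e : 0 < m -> 0 < delta -> 0 < t0 -> 0 < e ->
  exists R1, 4 * m ^ 2 <= R1 /\ forall t, t0 <= t ->
    Rabs (- C_fun m delta t p - C_partial m delta t p R1) <= e.
Proof.
  intros Hm Hd Ht0 He.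
  destruct (phi_small m delta (e * t0 / 6) Hm Hd) as [R0 [HR0 HR]].
  { apply Rdiv_lt_0_compat; nra. }
  exists (Rmax R0 (4 * m ^ 2)). split; [apply Rmax_r|].
  intros t Ht.
  apply (lim_bound _ _ _ _ (Rmax R0 (4 * m ^ 2)) (Cfun_spec m delta t p Hm Hd ltac:(lra))).
  intros v Hv. set (u := Rmax R0 (4 * m ^ 2)) in *.
  assert (R0 <= u) by apply Rmax_l.
  assert (4 * m ^ 2 <= u) by apply Rmax_r.
  assert (0 < 4 * m ^ 2) by nra.
  rewrite Cp_diff; auto; try lra. destruct (HR u) as [HL Hphi]; auto.
  eapply Rle_trans; [apply bound_tail; auto; lra|].
  apply Rle_trans with (6 / t * (e * t0 / 6)).
  { apply Rmult_le_compat_l; auto. apply Rlt_le, Rdiv_lt_0_compat; lra. }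
  apply Rle_trans with (6 / t * (e * t / 6)).
  { apply Rmult_le_compat_l. apply Rlt_le, Rdiv_lt_0_compat; lra. nra. }
  right; field; lra.
Qed.

Lemma sin_lip x y : Rabs (sin x - sin y) <= Rabs (x - y).
Proof.
  destruct (MVT_abs sin cos y x) as [c [Hc _]].
  { intros c _. apply derivable_pt_lim_sin. }
  rewrite Hc. rewrite <- (Rmult_1_l (Rabs (x - y))) at 2.
  apply Rmult_le_compat_r; [apply Rabs_pos| apply Rabs_le; apply COS_bound].
Qed.

Lemma f_diff_le m delta t t0 p M : 0 < M ->
  Rabs (C_integrand m delta t p M - C_integrand m delta t0 p M) <= 16 * Rabs (t - t0).
Proof.
  intros HM. pose proof (omega_pos p M HM). unfold C_integrand.
  replace (phi_lead m delta M * sin (omega p M * t) / omega p M -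
    phi_lead m delta M * sin (omega p M * t0) / omega p M) with
    (phi_lead m delta M * ((sin (omega p M * t) - sin (omega p M * t0)) / omega p M)) by (field; lra).
  rewrite Rabs_mult. apply Rmult_le_compat; try apply Rabs_pos. apply phi_abs_le.
  unfold Rdiv. rewrite Rabs_mult, Rabs_inv, (Rabs_right (omega p M)) by lra.
  apply Rmult_le_reg_r with (omega p M); auto.
  rewrite Rmult_assoc, Rinv_l by lra. rewrite Rmult_1_r.
  eapply Rle_trans; [apply sin_lip|].
  replace (omega p M * t - omega p M * t0) with (omega p M * (t - t0)) by ring.
  rewrite Rabs_mult, Rabs_right by lra. right; ring.
Qed.

Lemma Cp_lip m delta t t0 p R1 : 0 < m -> 0 < delta -> 4 * m ^ 2 <= R1 ->
  Rabs (C_partial m delta t p R1 - C_partial m delta t0 p R1) <= (R1 - 4 * m ^ 2) * (16 * Rabs (t - t0)).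
Proof.
  intros Hm Hd HR. assert (0 < 4 * m ^ 2) by nra. unfold C_partial.
  rewrite <- RInt_minus_R; try (apply exf; auto; lra).
  apply abs_RInt_le_const; auto.
  apply ex_RInt_minus_R; apply exf; auto; lra.
  intros x Hx. apply f_diff_le. lra.
Qed.

Lemma C_cont m delta p t0 : 0 < m -> 0 < delta -> 0 < t0 ->
  continuous (fun t => C_fun m delta t p) t0.
Proof.
  intros Hm Hd Ht0. apply filterlim_locally. intros eps.
  destruct eps as [e He]. simpl.
  destruct (tail_unif m delta p (t0 / 2) (e / 4) Hm Hd) as [R1 [HR1 Htail]]; try lra.
  set (D := Rmin (t0 / 2) (e / 4 / (16 * (R1 - 4 * m ^ 2 + 1)))).
  assert (HD : 0 < D).
  { unfold D. apply Rmin_pos; [lra|]. apply Rdiv_lt_0_compat; [lra|]. nra. }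
  exists (mkposreal D HD). intros t Ht. apply ball_R.
  change (Rabs (t - t0) < D) in Ht.
  assert (Hta : t0 / 2 <= t).
  { assert (D <= t0 / 2) by apply Rmin_l. apply Rabs_def2 in Ht. lra. }
  pose proof (Htail t Hta) as H1. pose proof (Htail t0 ltac:(lra)) as H2.
  pose proof (Cp_lip m delta t t0 p R1 Hm Hd HR1) as H3.
  assert (H4 : (R1 - 4 * m ^ 2) * (16 * Rabs (t - t0)) <= e / 4).
  { assert (D <= e / 4 / (16 * (R1 - 4 * m ^ 2 + 1))) by apply Rmin_r.
    assert (Rabs (t - t0) <= e / 4 / (16 * (R1 - 4 * m ^ 2 + 1))) by lra.
    apply Rle_trans with ((R1 - 4 * m ^ 2 + 1) * (16 * Rabs (t - t0))).
    { apply Rmult_le_compat_r; [pose proof (Rabs_pos (t - t0)); lra| lra]. }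
    apply Rmult_le_reg_r with (/ (16 * (R1 - 4 * m ^ 2 + 1))).
    { apply Rinv_0_lt_compat; nra. }
    replace ((R1 - 4 * m ^ 2 + 1) * (16 * Rabs (t - t0)) * / (16 * (R1 - 4 * m ^ 2 + 1)))
      with (Rabs (t - t0)) by (field; lra).
    unfold Rdiv in *. lra. }
  set (a1 := C_fun m delta t p) in *. set (a0 := C_fun m delta t0 p) in *.
  set (b1 := C_partial m delta t p R1) in *. set (b0 := C_partial m delta t0 p R1) in *.
  assert (K : forall x y z w : R, x - y = - (- x - z) - (z - w) + (- y - w)) by (intros; ring).
  rewrite (K a1 a0 b1 b0).
  eapply Rle_lt_trans; [apply Rabs_triang|].
  unfold Rminus at 1. 
  eapply Rle_lt_trans; [apply Rplus_le_compat_r; apply Rabs_triang|].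
  rewrite !Rabs_Ropp. lra.
Qed.


Definition Hb m delta t := 64 * sqrt t - 96 * PI * atan (Lg m delta (/ t) / PI).

Lemma Hb_deriv m delta t : 0 < m -> 0 < delta -> 0 < t -> is_derive (Hb m delta) t (hb m delta t).
Proof.
  intros Hm Hd Ht. pose proof PI_gt3. pose proof (sqrt_lt_R0 t Ht).
  assert (Hs2 : sqrt t * sqrt t = t) by (apply sqrt_sqrt; lra).
  unfold Hb, hb, Lg.
  assert (E : / t * delta * / (4 * (m * (m * 1))) = / t * delta / (4 * m ^ 2)) by (field; lra).
  auto_derive.
  - repeat split; try lra. apply Rmult_lt_0_compat; [apply Rmult_lt_0_compat; [apply Rinv_0_lt_compat; lra | lra] | apply Rinv_0_lt_compat; nra].
  - rewrite ?E. set (L := ln _). set (s := sqrt t) in *.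
    field. repeat split; try nra. 
Qed.

Lemma hb_cont m delta t : 0 < m -> 0 < delta -> 0 < t -> continuous (hb m delta) t.
Proof.
  intros Hm Hd Ht. apply (@ex_derive_continuous R_AbsRing R_NormedModule).
  pose proof PI_gt3. pose proof (sqrt_lt_R0 t Ht). unfold hb, Lg. auto_derive.
  repeat split; try lra; try nra.
  apply Rmult_lt_0_compat; [apply Rmult_lt_0_compat; [apply Rinv_0_lt_compat; lra | lra] | apply Rinv_0_lt_compat; nra].
Qed.

Lemma RInt_correct_R (f : R -> R) a b : ex_RInt f a b -> is_RInt f a b (RInt f a b).
Proof. intros H. exact (RInt_correct (V:=R_CompleteNormedModule) f a b H). Qed.

Lemma gcont m delta p t : 0 < m -> 0 < delta -> 0 < t ->
  continuous (fun t => Rabs (C_fun m delta t p)) t.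
Proof. intros. apply continuous_Rabs_comp. apply C_cont; auto. Qed.

Lemma exg m delta p a b : 0 < m -> 0 < delta -> 0 < a -> 0 < b ->
  ex_RInt (fun t => Rabs (C_fun m delta t p)) a b.
Proof.
  intros. apply ex_RInt_cont_R. intros z Hz. apply gcont; auto.
  assert (0 < Rmin a b) by (apply Rmin_pos; auto). lra.
Qed.

Lemma Gbound m delta p a : 0 < m -> 0 < delta -> 0 < a -> a <= delta / (4 * m ^ 2) ->
  RInt (fun t => Rabs (C_fun m delta t p)) a (delta / (4 * m ^ 2))
   <= Hb m delta (delta / (4 * m ^ 2)) + 48 * PI ^ 2.
Proof.
  intros Hm Hd Ha Hat. set (tau := delta / (4 * m ^ 2)) in *.
  assert (Htau : 0 < tau) by lra.
  apply Rle_trans with (RInt (hb m delta) a tau).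
  { apply RInt_le; auto. apply exg; auto.
    apply ex_RInt_cont_R. intros z Hz. rewrite Rmin_left in Hz by lra. apply hb_cont; auto; lra.
    intros x Hx. apply part3_bound; auto; unfold tau in *; lra. }
  rewrite (RInt_derive_R (Hb m delta)).
  - assert (- Hb m delta a <= 48 * PI ^ 2).
    { unfold Hb. pose proof (atan_bound (Lg m delta (/ a) / PI)). pose proof PI_gt3.
      pose proof (sqrt_pos a). set (x := atan _) in *.
      assert (PI * x <= PI * (PI / 2)) by (apply Rmult_le_compat_l; lra). nra. }
    lra.
  - intros x Hx. rewrite Rmin_left in Hx by lra. apply Hb_deriv; auto; lra.
  - intros x Hx. rewrite Rmin_left in Hx by lra. apply hb_cont; auto; lra.
Qed.

Lemma Gmono m delta p a b : 0 < m -> 0 < delta -> 0 < a -> a <= b -> b <= delta / (4 * m ^ 2) ->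
  RInt (fun t => Rabs (C_fun m delta t p)) b (delta / (4 * m ^ 2))
  <= RInt (fun t => Rabs (C_fun m delta t p)) a (delta / (4 * m ^ 2)).
Proof.
  intros Hm Hd Ha Hab Hbt.
  rewrite <- (RInt_Chasles_R _ a b); try (apply exg; auto; lra).
  assert (0 <= RInt (fun t => Rabs (C_fun m delta t p)) a b).
  { apply RInt_ge_0; auto. apply exg; auto; lra. intros; apply Rabs_pos. }
  lra.
Qed.

Theorem lemma4p12 (m delta : R) (Hm : 0 < m) (Hdelta : 0 < delta) :
  (forall (t : R) (p : R * R * R), 0 < t ->
     ex_finite_lim (C_partial m delta t p) p_infty) /\
  (exists C0 : R, 0 < C0 /\
     forall (t : R) (p : R * R * R), 0 < t -> Rabs (C_fun m delta t p) <= C0 / t) /\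
  (exists tau : R, 0 < tau /\ exists K : R,
     forall p : R * R * R, exists I : R,
       is_RInt_gen (fun t => Rabs (C_fun m delta t p)) (at_right 0) (at_point tau) I
       /\ I <= K).
Proof.
  split; [|split].
  - intros t p Ht. apply part1; auto.
  - exists (2 * (32 + 32 * PI ^ 2 * PI)). pose proof PI_gt3. split; [nra|].
    intros t p Ht. apply part2; auto.
  - set (tau := delta / (4 * m ^ 2)).
    assert (Htau : 0 < tau) by (unfold tau; apply Rdiv_lt_0_compat; nra).
    exists tau. split; auto. exists (Hb m delta tau + 48 * PI ^ 2). intros p.
    set (g := fun t => Rabs (C_fun m delta t p)).
    set (E := fun y => exists a, 0 < a <= tau /\ y = RInt g a tau).
    destruct (completeness E) as [I [Hub Hlub]].
    { exists (Hb m delta tau + 48 * PI ^ 2). intros y [a [Ha ->]]. apply Gbound; auto; apply Ha. }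
    { exists (RInt g tau tau). exists tau. split; auto. lra. }
    exists I. split.
    2:{ apply Hlub. intros y [a [Ha ->]]. apply Gbound; auto; apply Ha. }
    unfold is_RInt_gen.
    apply (filterlimi_lim_ext_loc (fun ab => RInt g (fst ab) (snd ab))).
    + apply (Filter_prod _ _ _ (fun a => 0 < a) (fun b => b = tau)).
      * exists (mkposreal 1 Rlt_0_1). intros y _ Hy. exact Hy.
      * reflexivity.
      * intros x y Hx Hy. simpl. subst y. apply RInt_correct_R. apply exg; auto.
    + apply filterlim_locally. intros eps.
      assert (Hex : exists a1, 0 < a1 <= tau /\ I - eps < RInt g a1 tau).
      { destruct (Classical_Prop.classic (exists a1, 0 < a1 <= tau /\ I - eps < RInt g a1 tau)) as [H|H]; auto.
        exfalso. assert (I <= I - eps).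
        { apply Hlub. intros y [a [Ha ->]].
          destruct (Rle_or_lt (RInt g a tau) (I - eps)) as [H1|H1]; auto.
          exfalso. apply H. exists a. auto. }
        destruct eps; simpl in *; lra. }
      destruct Hex as [a1 [Ha1 Hg1]].
      apply (Filter_prod _ _ _ (fun a => 0 < a < a1) (fun b => b = tau)).
      * exists (mkposreal a1 (proj1 Ha1)). intros y Hy Hy0. split; auto.
        change (Rabs (y - 0) < a1) in Hy. rewrite Rminus_0_r in Hy. apply Rabs_def2 in Hy. lra.
      * reflexivity.
      * intros x y Hx Hy. simpl. subst y. apply ball_R.
        assert (H1 : RInt g x tau <= I) by (apply Hub; exists x; split; auto; lra).
        assert (H2 : RInt g a1 tau <= RInt g x tau) by (apply Gmono; auto; unfold tau in *; lra).
        apply Rabs_def1; destruct eps; simpl in *; lra.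
Qed.
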